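(* Let $u\colon A\to\mathbb{R}$ be a locally Lipschitz function on an open set $A\subset\mathbb{R}^n$, and let $\psi\in C^2(I)$ satisfy $\psi'(t)>0$ for every $t\in I$, where $I\subset\mathbb{R}$ is an open interval containing $u(A)$. If the composite function $v=\psi\circ u$ is concave on every convex subset of $A$, then $u$ is locally semiconcave in $A$.
   Context: A function $u$ is locally semiconcave in $A$ if for every compact $K\subset A$ there is a constant $C=C(K)\ge 0$ such that $u(\lambda x+(1-\lambda)y)\ge \lambda u(x)+(1-\lambda)u(y)-C\frac{\lambda(1-\lambda)}{2}|x-y|^2$ for all segments $[x,y]\subset K$ and all $\lambda\in[0,1]$ (equivalently, $D^2u\le C\,I$ in the sense of distributions locally). *)

(* Defs.v *)
From HB Require Import structures.
From mathcomp Require Import all_boot all_order all_algebra.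
From mathcomp Require Import all_classical all_reals all_analysis.
Set Implicit Arguments. Unset Strict Implicit. Unset Printing Implicit Defensive.
Import Order.TTheory GRing.Theory Num.Theory.
Import numFieldNormedType.Exports.
Local Open Scope classical_set_scope.
Local Open Scope ring_scope.

Definition sqnorm {R : realType} {n : nat} (x : 'rV[R]_n) : R :=
  \sum_(i < n) (x ord0 i) ^+ 2.
Definition enorm {R : realType} {n : nat} (x : 'rV[R]_n) : R :=
  Num.sqrt (sqnorm x).

Definition convex_subset {R : realType} {n : nat} (C : set 'rV[R]_n) : Prop :=
  forall x y (l : R), C x -> C y -> 0 <= l <= 1 -> C (l *: x + (1 - l) *: y).

Definition concave_on {R : realType} {n : nat} (C : set 'rV[R]_n)
  (v : 'rV[R]_n -> R) : Prop :=
  forall x y (l : R), C x -> C y -> 0 <= l <= 1 ->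
    l * v x + (1 - l) * v y <= v (l *: x + (1 - l) *: y).

Definition locally_lipschitz {R : realType} {n : nat} (A : set 'rV[R]_n)
  (u : 'rV[R]_n -> R) : Prop :=
  forall x, A x -> exists r : R, 0 < r /\ exists L : R,
    forall y z, A y -> A z -> enorm (y - x) < r -> enorm (z - x) < r ->
      `|u y - u z| <= L * enorm (y - z).

Definition segment_in {R : realType} {n : nat} (x y : 'rV[R]_n)
  (K : set 'rV[R]_n) : Prop :=
  forall m : R, 0 <= m <= 1 -> K (m *: x + (1 - m) *: y).

Definition locally_semiconcave {R : realType} {n : nat} (A : set 'rV[R]_n)
  (u : 'rV[R]_n -> R) : Prop :=
  forall K : set 'rV[R]_n, compact K -> K `<=` A ->
    exists C : R, 0 <= C /\
      forall x y (l : R), segment_in x y K -> 0 <= l <= 1 ->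
        l * u x + (1 - l) * u y - C * (l * (1 - l)) / 2 * sqnorm (x - y)
          <= u (l *: x + (1 - l) *: y).

Definition C2_on {R : realType} (I : set R) (psi : R -> R) : Prop :=
  (forall t, I t -> derivable psi t 1) /\
  (forall t, I t -> derivable (derive1 psi) t 1) /\
  (forall t, I t -> {for t, continuous (derive1 (derive1 psi))}).

(* Main.v *)
Require Import Defs.
From HB Require Import structures.
From mathcomp Require Import all_boot all_order all_algebra.
From mathcomp Require Import all_classical all_reals all_analysis.
From mathcomp Require Import ring lra finmap.
Import Order.TTheory GRing.Theory Num.Theory.
Import numFieldNormedType.Exports.
Import Num.Def.
Local Open Scope classical_set_scope.
Local Open Scope ring_scope.
Section S.
Variables (R : realType) (n : nat).
Implicit Types (x y z : 'rV[R]_n).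

Lemma sqnorm_ge0 x : 0 <= sqnorm x.
Proof. by rewrite /sqnorm; apply: sumr_ge0 => i _; exact: sqr_ge0. Qed.

Lemma enorm_ge0 x : 0 <= enorm x.
Proof. exact: sqrtr_ge0. Qed.

Lemma enorm_sq x : enorm x ^+ 2 = sqnorm x.
Proof. by rewrite /enorm sqr_sqrtr // sqnorm_ge0. Qed.

Lemma coord_sq_le x j : (x ord0 j) ^+ 2 <= sqnorm x.
Proof.
rewrite /sqnorm (bigD1 j) //= lerDl.
by apply: sumr_ge0 => i _; exact: sqr_ge0.
Qed.

Lemma coord_le_enorm x j : `|x ord0 j| <= enorm x.
Proof.
rewrite /enorm -sqrtr_sqr; apply: ler_wsqrtr; exact: coord_sq_le.
Qed.

Lemma sqnorm_le_coord x e : (forall j, `|x ord0 j| <= e) -> sqnorm x <= n%:R * e ^+ 2.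
Proof.
move=> H; rewrite /sqnorm.
have -> : n%:R * e ^+ 2 = \sum_(i < n) e ^+ 2 by rewrite sumr_const card_ord mulr_natl.
apply: ler_sum => i _; rewrite -real_normK ?num_real //.
by rewrite lerXn2r // ?nnegrE // (le_trans _ (H i)).
Qed.

Lemma enorm_lt_coord x r : 0 < r ->
  (forall j, `|x ord0 j| < r / (n%:R + 1)) -> enorm x < r.
Proof.
move=> r0 H.
have n0 : 0 <= n%:R :> R by [].
set e := r / (n%:R + 1).
have e0 : 0 < e by rewrite /e divr_gt0 // ltr_wpDl.
have re : r = e * (n%:R + 1) by rewrite /e divfK // gt_eqF // ltr_wpDl.
have := @sqnorm_le_coord x e (fun j => ltW (H j)).
move=> hs.
rewrite /enorm -(ger0_norm (ltW r0)) -sqrtr_sqr ltr_sqrt ?exprn_gt0 //.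
apply: (le_lt_trans hs); rewrite re; nra.
Qed.

Lemma ball_coord {x y e} : ball x e y -> forall j, `|x ord0 j - y ord0 j| < e.
Proof.
rewrite -ball_normE /ball_ => H j.
apply: le_lt_trans H.
rewrite [leRHS]/normr /= mx_normrE; apply/bigmax_geP; right => /=; exists (ord0, j) => //.
by rewrite !mxE.
Qed.

Lemma coord_ball x y e : 0 < e -> (forall j, `|x ord0 j - y ord0 j| < e) -> ball x e y.
Proof.
move=> e0 H; rewrite -ball_normE /ball_ /=; rewrite [X in X < _]/normr /= mx_normrE.
apply/bigmax_ltP; split => // -[i j] _ /=; rewrite !mxE.
by rewrite (ord1 i); exact: H.
Qed.


Lemma sqnormN x : sqnorm (- x) = sqnorm x.
Proof. by apply: eq_bigr => i _; rewrite mxE sqrrN. Qed.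

Lemma enormB x y : enorm (x - y) = enorm (y - x).
Proof. by rewrite /enorm -sqnormN opprB. Qed.

Lemma coordB x y j : (x - y) ord0 j = x ord0 j - y ord0 j.
Proof. by rewrite !mxE. Qed.

Lemma u_cont (A : set 'rV[R]_n) u : open A -> locally_lipschitz A u ->
  forall x, A x -> {for x, continuous u}.
Proof.
move=> Aop lip x Ax.
have [r [r0 [L HL]]] := lip x Ax.
have : nbhs x A by rewrite openE in Aop; exact: Aop.
move=> /nbhs_ballP [d1 d10 Hd1].
apply/(@cvgrPdist_lt _ _ _ _ (nbhs_filter x)) => e e0.
have n0 : 0 < n%:R + 1 :> R by rewrite ltr_wpDl.
set eta := Num.min r (e / (`|L| + 1)).
have eta0 : 0 < eta by rewrite lt_min r0 divr_gt0 // ltr_wpDl.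
apply/nbhs_ballP; exists (Num.min d1 (eta / (n%:R + 1))).
  by rewrite /= lt_min d10 divr_gt0.
move=> t /= Bt.
have At : A t.
  apply: Hd1; apply: coord_ball => // j.
  by apply: (lt_le_trans (ball_coord Bt j)); rewrite ge_min lexx.
have hen : enorm (t - x) < eta.
  apply: enorm_lt_coord => // j; rewrite coordB distrC.
  by apply: (lt_le_trans (ball_coord Bt j)); rewrite ge_min lexx orbT.
have exx : enorm (x - x) < r.
  rewrite subrr /enorm /sqnorm big1 ?sqrtr0 // => i _; by rewrite mxE expr0n.
have her : enorm (t - x) < r.
  by apply: (lt_le_trans hen); rewrite ge_min lexx.
have := HL x t Ax At exx her; rewrite enormB => H2.
apply: (le_lt_trans H2).
have hen2 : enorm (t - x) < e / (`|L| + 1).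
  by apply: (lt_le_trans hen); rewrite ge_min lexx orbT.
have e2 : 0 <= enorm (t - x) := enorm_ge0 _.
have L1 : L <= `|L| := ler_norm L.
have L2 : 0 <= `|L| := normr_ge0 L.
rewrite ltr_pdivlMr ?ltr_wpDl // in hen2.
nra.
Qed.


Lemma unif_lip (A K : set 'rV[R]_n) u (B : R) : locally_lipschitz A u ->
  compact K -> K `<=` A ->
  (forall y z, K y -> K z -> `|u y - u z| <= B) ->
  exists L, forall y z, K y -> K z -> `|u y - u z| <= L * enorm (y - z).
Proof.
move=> lip cK KA HB.
have : forall x, exists p : R * R, A x -> 0 < p.1 /\ forall y z, A y -> A z ->
    enorm (y - x) < p.1 -> enorm (z - x) < p.1 -> `|u y - u z| <= p.2 * enorm (y - z).
  move=> x; case: (pselect (A x)) => Ax; last by exists (0, 0).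
  have [r [r0 [L HL]]] := lip x Ax.
  by exists (r, L).
move=> /choice [f Hf].
have n0 : 0 < n%:R + 1 :> R by rewrite ltr_wpDl.
pose rho x := (f x).1 / (2 * (n%:R + 1)).
have rho0 x : A x -> 0 < rho x.
  by move=> Ax; rewrite /rho divr_gt0 // ?mulr_gt0 // (Hf x Ax).1.
rewrite compact_cover in cK.
have [D' sD cov] := cK _ K (fun x => ball x (rho x)) (fun i _ => ball_open i (rho i))
  (fun y Ky => @ex_intro2 _ K (fun i => ball i (rho i) y) y Ky (ballxx y (rho0 y (KA y Ky)))).
pose delta := \big[Order.min/1]_(i <- D') rho i.
have delta0 : 0 < delta.
  rewrite /delta big_seq; apply: (big_ind (fun v : R => 0 < v)) => //.
    by move=> a b a0 b0; rewrite lt_min a0 b0.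
  by move=> i /sD /set_mem /KA /rho0.
have Bge0 : forall y, K y -> 0 <= B.
  by move=> y Ky; apply: le_trans (HB y y Ky Ky).
pose Lm := \big[Order.max/0]_(i <- D') (f i).2.
have Lm0 : 0 <= Lm by apply: bigmax_ge_id.
exists (Lm + B / delta).
move=> y z Ky Kz.
have [i iD Biy] := cov y Ky.
have Ai : A i by apply/KA/set_mem/sD.
have [fi0 Hfi] := Hf i Ai.
have e0 := enorm_ge0 (y - z).
have Bd0 : 0 <= B / delta by rewrite divr_ge0 // ?(Bge0 y Ky) // ltW.
have [small|big] := ltP (enorm (y - z)) delta.
  have rhod : delta <= rho i by apply: ge_bigmin_seq.
  have r2 : (f i).1 / (n%:R + 1) = 2 * rho i.
    rewrite /rho; field; by rewrite gt_eqF.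
  have ri0 := rho0 i Ai.
  have Hy : enorm (y - i) < (f i).1.
    apply: enorm_lt_coord => // j; rewrite coordB distrC.
    apply: (lt_le_trans (ball_coord Biy j)).
    rewrite r2; lra.
  have Hz : enorm (z - i) < (f i).1.
    apply: enorm_lt_coord => // j; rewrite coordB distrC.
    have h1 := ball_coord Biy j.
    have h2 : `|y ord0 j - z ord0 j| < delta.
      by rewrite -coordB; apply: le_lt_trans (coord_le_enorm _ _) small.
    have : `|i ord0 j - z ord0 j| < rho i + delta.
      apply: le_lt_trans (ler_distD (y ord0 j) _ _) _.
      by apply: ltrD.
    move=> h3; apply: (lt_le_trans h3).
    rewrite r2; lra.
  have := Hfi y z (KA y Ky) (KA z Kz) Hy Hz.
  move=> H; apply: (le_trans H).
  have : (f i).2 <= Lm by exact: (@le_bigmax_seq _ _ _ _ 0 i xpredT (fun k => (f k).2) iD).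
  nra.
have := HB y z Ky Kz => H; apply: (le_trans H).
have : B <= B / delta * enorm (y - z).
  rewrite mulrAC ler_pdivlMr // ler_wpM2l //; exact: Bge0 Ky.
nra.
Qed.

End S.
Arguments u_cont {R n A u}.
Arguments unif_lip {R n A K u B}.
Section OneD.
Variable R : realType.

Lemma mvt_gen {f : R -> R} {al be : R} :
  (forall t, al <= t <= be -> derivable f t 1) ->
  forall s t, al <= s <= be -> al <= t <= be ->
  exists xi, [/\ al <= xi <= be, `|xi - s| <= `|t - s| & f t - f s = derive1 f xi * (t - s)].
Proof.
move=> df s t /andP[aS sb] /andP[aT tb].
have gen : forall p q, al <= p -> q <= be -> p < q ->
    exists2 c, c \in `]p, q[ & f q - f p = derive1 f c * (q - p).
  move=> p q ap qb pq; apply: MVT => //.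
    move=> x /[!in_itv] /= /andP[px xq]; rewrite derive1E; apply: derivableP.
    apply: df; apply/andP; split; lra.
  apply: derivable_within_continuous => x /[!in_itv] /= /andP[px xq].
  apply: df; apply/andP; split; lra.
case: (ltgtP s t) => [st|ts|<-].
- have [c /[!in_itv] /= /andP[sc ct] H] := gen s t aS tb st.
  exists c; split => //; first by apply/andP; split; lra.
  by rewrite !ger0_norm; lra.
- have [c /[!in_itv] /= /andP[tc cs] H] := gen t s aT sb ts.
  exists c; split => //; first by apply/andP; split; lra.
    by rewrite !ler0_norm; lra.
  have -> : f t - f s = - (f s - f t) by ring.
  rewrite H; ring.
- exists s; split; first by apply/andP.
  by rewrite subrr normr0.
  by rewrite !subrr mulr0.
Qed.

Lemma key1D (psi : R -> R) (al be M k : R) :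
  (forall t, al <= t <= be -> derivable psi t 1) ->
  (forall t, al <= t <= be -> derivable (derive1 psi) t 1) ->
  (forall t, al <= t <= be -> `|derive1 (derive1 psi) t| <= M) ->
  (forall t, al <= t <= be -> k <= derive1 psi t) ->
  0 < k -> 0 <= M ->
  forall a b c l, al <= a <= be -> al <= b <= be -> al <= c <= be -> 0 <= l <= 1 ->
  l * psi a + (1 - l) * psi b <= psi c ->
  l * a + (1 - l) * b - c <= M / k * (l * (1 - l) * (a - b) ^+ 2).
Proof.
move=> d1 d2 bM bk k0 M0 a b c l Ja Jb Jc /andP[l0 l1] Hc.
set m := l * a + (1 - l) * b.
have Jm : al <= m <= be.
  move: Ja Jb => /andP[? ?] /andP[? ?]; apply/andP; split; rewrite /m; nra.
have U1 : forall s t, al <= s <= be -> al <= t <= be ->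
    `|derive1 psi t - derive1 psi s| <= M * `|t - s|.
  move=> s t Js Jt; have [xi [Jxi _ ->]] := mvt_gen d2 _ _ Js Jt.
  by rewrite normrM ler_wpM2r // bM.
have U2 : forall t, al <= t <= be ->
    - (M * (t - m) ^+ 2) <= psi t - psi m - derive1 psi m * (t - m).
  move=> t Jt; have [xi [Jxi hxi ->]] := mvt_gen d1 _ _ Jm Jt.
  have h1 := U1 _ _ Jm Jxi.
  set d := derive1 psi xi - derive1 psi m in h1 *.
  set h := t - m in hxi *.
  have -> : derive1 psi xi * h - derive1 psi m * h = d * h by rewrite /d; ring.
  have h2 : `|d| <= M * `|h| by apply: (le_trans h1); rewrite ler_wpM2l.
  have h3 : - (d * h) <= `|d| * `|h| by rewrite -normrM -normrN; exact: ler_norm.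
  have h4 : `|h| * `|h| = h ^+ 2 by rewrite -normrM -expr2 ger0_norm // sqr_ge0.
  have h5 : `|d| * `|h| <= M * `|h| * `|h| by rewrite ler_wpM2r.
  rewrite -mulrA h4 in h5; lra.
set E := l * (1 - l) * (a - b) ^+ 2.
have l10 : 0 <= 1 - l by rewrite subr_ge0.
have E0 : 0 <= E by rewrite /E; apply: mulr_ge0; [exact: mulr_ge0 | exact: sqr_ge0].
have Ua := ler_wpM2l l0 (U2 a Ja).
have Ub := ler_wpM2l l10 (U2 b Jb).
set P := derive1 psi m in Ua Ub.
have id1 : l * (a - m) + (1 - l) * (b - m) = 0 by rewrite /m; ring.
have id2 : l * (a - m) ^+ 2 + (1 - l) * (b - m) ^+ 2 = E by rewrite /E /m; ring.
have Hm : psi m - M * E <= psi c.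
  have e1 : l * (psi a - psi m - P * (a - m)) + (1 - l) * (psi b - psi m - P * (b - m))
     = l * psi a + (1 - l) * psi b - psi m - P * (l * (a - m) + (1 - l) * (b - m)) by ring.
  have e2 : l * - (M * (a - m) ^+ 2) + (1 - l) * - (M * (b - m) ^+ 2) = - (M * E).
    by rewrite -id2; ring.
  rewrite id1 mulr0 subr0 in e1.
  lra.
have [hmc|hmc] := leP m c.
  have : 0 <= M / k * E by rewrite mulr_ge0 // divr_ge0 // ltW.
  lra.
have [xi [Jxi _ Hxi]] := mvt_gen d1 _ _ Jc Jm.
have hk := bk _ Jxi.
have : k * (m - c) <= M * E.
  have : k * (m - c) <= derive1 psi xi * (m - c) by rewrite ler_wpM2r // subr_ge0 ltW.
  lra.
move=> H; rewrite mulrAC ler_pdivlMr //; lra.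
Qed.
End OneD.
Arguments key1D {R psi al be M k}.

Theorem proposition2p1 (R : realType) (n : nat) (A : set 'rV[R]_n)
  (u : 'rV[R]_n -> R) (I : set R) (psi : R -> R) :
  open A ->
  locally_lipschitz A u ->
  is_interval I -> open I -> u @` A `<=` I ->
  C2_on I psi ->
  (forall t, I t -> 0 < derive1 psi t) ->
  (forall C : set 'rV[R]_n, C `<=` A -> convex_subset C ->
     concave_on C (psi \o u)) ->
  locally_semiconcave A u.
Proof.
move=> Aop lip Iint Iop uAI [d1 [d2 c2]] pos conc K cK KA.
have segx : forall x y, segment_in x y K -> K x.
  move=> x y seg; have := seg 1; rewrite scale1r subrr scale0r addr0; apply.
  by rewrite ler01 lexx.
have segy : forall x y, segment_in x y K -> K y.
  move=> x y seg; have := seg 0; rewrite scale0r add0r subr0 scale1r; apply.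
  by rewrite ler01 lexx.
case: (pselect (exists x, K x)) => [[x0 Kx0]|nK]; last first.
  exists 0; split => // x y l seg; exfalso; apply: nK; exists x; exact: segx seg.
have ucont : {within K, continuous u}.
  apply: continuous_in_subspaceT => x /set_mem Kx.
  exact: (u_cont Aop lip x (KA x Kx)).
have [cmax /set_mem Kcmax Hmax] := EVT_max_rV (ex_intro _ x0 Kx0) cK ucont.
have [cmin /set_mem Kcmin Hmin] := EVT_min_rV (ex_intro _ x0 Kx0) cK ucont.
set al := u cmin; set be := u cmax.
have uK : forall y, K y -> al <= u y <= be.
  by move=> y Ky; rewrite Hmin ?Hmax //; exact: mem_set.
have aleb : al <= be by have /andP[h1 h2] := uK x0 Kx0; exact: le_trans h1 h2.
have IJ : forall t, al <= t <= be -> I t.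
  apply: Iint; apply: uAI.
    by exists cmin => //; apply: KA.
  by exists cmax => //; apply: KA.
have c2J : {within `[al, be], continuous (derive1 (derive1 psi))}.
  apply: continuous_in_subspaceT => t /set_mem /=; rewrite in_itv /= => ht.
  exact: c2 t (IJ t ht).
have [cM JcM HM] := EVT_max aleb c2J.
have [cm Jcm Hm] := EVT_min aleb c2J.
set M := `|derive1 (derive1 psi) cM| + `|derive1 (derive1 psi) cm|.
have M0 : 0 <= M by rewrite addr_ge0.
have bM : forall t, al <= t <= be -> `|derive1 (derive1 psi) t| <= M.
  move=> t ht.
  have h1 : derive1 (derive1 psi) t <= derive1 (derive1 psi) cM.
    by apply: HM; rewrite in_itv /= ht.
  have h2 : derive1 (derive1 psi) cm <= derive1 (derive1 psi) t.
    by apply: Hm; rewrite in_itv /= ht.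
  have h3 := ler_norm (derive1 (derive1 psi) cM).
  have h4 := normr_ge0 (derive1 (derive1 psi) cM).
  have h5 := normr_ge0 (derive1 (derive1 psi) cm).
  have h6 := ler_norm (- derive1 (derive1 psi) cm); rewrite normrN in h6.
  move: h1 h2 h3 h4 h5 h6; rewrite /M.
  move: (derive1 (derive1 psi) t) (derive1 (derive1 psi) cM) (derive1 (derive1 psi) cm) => X Y Z.
  move: `|Y| `|Z| => nY nZ *.
  rewrite ler_norml; apply/andP; split; lra.
have c1J : {within `[al, be], continuous (derive1 psi)}.
  apply: derivable_within_continuous => t; rewrite in_itv /= => ht.
  exact: d2 t (IJ t ht).
have [ck Jck Hk] := EVT_min aleb c1J.
set k := derive1 psi ck.
have k0 : 0 < k by apply: pos; apply: IJ; rewrite in_itv /= in Jck.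
have bk : forall t, al <= t <= be -> k <= derive1 psi t.
  by move=> t ht; apply: Hk; rewrite in_itv /= ht.
have d1J : forall t, al <= t <= be -> derivable psi t 1 by move=> t /IJ /d1.
have d2J : forall t, al <= t <= be -> derivable (derive1 psi) t 1 by move=> t /IJ /d2.
have HB : forall y z, K y -> K z -> `|u y - u z| <= be - al.
  move=> y z Ky Kz; have := uK y Ky; have := uK z Kz.
  move=> /andP[? ?] /andP[? ?]; rewrite ler_norml; apply/andP; split; lra.
have [L HL] := unif_lip lip cK KA HB.
set Q := M / k.
have Q0 : 0 <= Q by rewrite divr_ge0 // ltW.
exists (2 * (Q * L ^+ 2)); split.
  by rewrite mulr_ge0 // mulr_ge0 // sqr_ge0.
move=> x y l seg hl.
have Kx := segx x y seg; have Ky := segy x y seg.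
have Kz := seg l hl.
pose Cs := [set w | exists2 m : R, 0 <= m <= 1 & w = m *: x + (1 - m) *: y].
have CsA : Cs `<=` A by move=> w [m hm ->]; apply: KA; exact: seg.
have Csc : convex_subset Cs.
  move=> w1 w2 l' [m1 hm1 ->] [m2 hm2 ->] hl'.
  exists (l' * m1 + (1 - l') * m2).
    move: hm1 hm2 hl' => /andP[a1 b1] /andP[a2 b2] /andP[a3 b3].
    have c3 : 0 <= 1 - l' by rewrite subr_ge0.
    have p1 : 0 <= l' * m1 by rewrite mulr_ge0.
    have p2 : 0 <= (1 - l') * m2 by rewrite mulr_ge0.
    have q1 : l' * m1 <= l' * 1 by rewrite ler_wpM2l.
    have q2 : (1 - l') * m2 <= (1 - l') * 1 by rewrite ler_wpM2l.
    rewrite !mulr1 in q1 q2.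
    apply/andP; split; lra.
  by apply/rowP => j; rewrite !mxE; ring.
have Cx : Cs x.
  by exists 1; [rewrite ler01 lexx | rewrite scale1r subrr scale0r addr0].
have Cy : Cs y.
  by exists 0; [rewrite ler01 lexx | rewrite scale0r add0r subr0 scale1r].
have Hc := conc Cs CsA Csc x y l Cx Cy hl.
rewrite /= in Hc.
have Hkey := key1D d1J d2J bM bk k0 M0 (u x) (u y) (u (l *: x + (1 - l) *: y)) l
  (uK x Kx) (uK y Ky) (uK _ Kz) hl Hc.
have hLx := HL x y Kx Ky.
have hp := normr_ge0 (u x - u y).
have hsq : `|u x - u y| ^+ 2 = (u x - u y) ^+ 2 by rewrite real_normK // num_real.
have hsq2 : (u x - u y) ^+ 2 <= L ^+ 2 * sqnorm (x - y).
  rewrite -hsq -enorm_sq -exprMn; rewrite ler_pXn2r ?nnegrE //; exact: le_trans hLx.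
move: hl => /andP[l0 l1].
have ll0 : 0 <= l * (1 - l) by rewrite mulr_ge0 // subr_ge0.
have H3 : Q * (l * (1 - l) * (u x - u y) ^+ 2) <= Q * (l * (1 - l) * (L ^+ 2 * sqnorm (x - y))).
  by rewrite ler_wpM2l // ler_wpM2l.
have eqC : 2 * (Q * L ^+ 2) * (l * (1 - l)) / 2 * sqnorm (x - y)
    = Q * (l * (1 - l) * (L ^+ 2 * sqnorm (x - y))).
  by field; rewrite ?pnatr_eq0.
have Hk2 : l * u x + (1 - l) * u y - u (l *: x + (1 - l) *: y)
    <= Q * (l * (1 - l) * (u x - u y) ^+ 2) := Hkey.
rewrite eqC; lra.
Qed.
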